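(* Let $n,N\ge 1$ be integers, let $\Phi:\mathbb{R}^n\times\mathbb{R}\to\mathbb{R}$ and $F:\mathbb{R}^n\times\mathbb{R}\to\mathbb{R}^n$ be twice continuously differentiable, and fix an initial state $x_0\in\mathbb{R}^n$. For a control vector $z=[u_0,u_1,\dots,u_N]^T\in\mathbb{R}^{N+1}$ (scalar controls $u_k\in\mathbb{R}$), define the states recursively by $x_{k+1}=F(x_k,u_k)$, $k=0,1,\dots,N-1$, and the cost $$J(x_0,z)=\sum_{k=0}^{N}\Phi(x_k,u_k),$$ regarded as a function of $z$ (each $x_k$ being a function of $x_0,u_0,\dots,u_{k-1}$). Define the Hamiltonian $H(x,u,\lambda)=\Phi(x,u)+\lambda^TF(x,u)$ for $x,\lambda\in\mathbb{R}^n$, $u\in\mathbb{R}$, and set $$G(x,u,\lambda)=\frac{\partial H(x,u,\lambda)}{\partial x}\in\mathbb{R}^n,\qquad L(x,u,\lambda)=\frac{\partial H(x,u,\lambda)}{\partial u}\in\mathbb{R}.$$ Define costates by the backward recursion $\lambda_{N+1}=\mathbf{0}$ and $\lambda_k=G(x_k,u_k,\lambda_{k+1})$ for $k=N,N-1,\dots,1$. Fix $i\in\{0,1,\dots,N\}$. For $k=0,1,\dots,N$ and $x,\lambda,\alpha,\beta\in\mathbb{R}^n$, $u\in\mathbb{R}$, define $$H_i^{(k)}(x,u,\lambda,\alpha,\beta)=\begin{cases}L(x,u,\lambda)+\alpha^TF(x,u)+\beta^TG(x,u,\lambda), & k=i,\\ \alpha^TF(x,u)+\beta^TG(x,u,\lambda),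 & k\neq i.\end{cases}$$ Define vectors $\beta_k,\alpha_k\in\mathbb{R}^n$ by the forward recursion $\beta_0=\mathbf{0}$, $$\beta_{k+1}=\frac{\partial H_i^{(k)}(x_k,u_k,\lambda_{k+1},\alpha_{k+1},\beta_k)}{\partial \lambda}\quad(k=0,1,\dots,N-1),$$ (the partial derivative with respect to the third argument), and the backward recursion $\alpha_{N+1}=\mathbf{0}$, $$\alpha_k=\frac{\partial H_i^{(k)}(x_k,u_k,\lambda_{k+1},\alpha_{k+1},\beta_k)}{\partial x}\quad(k=N,N-1,\dots,1)$$ (the partial derivative with respect to the first argument). Write $H^i_k=H_i^{(k)}(x_k,u_k,\lambda_{k+1},\alpha_{k+1},\beta_k)$. Then the $i$th row of the Hessian matrix $\nabla^2 J$ of $J(x_0,\cdot)$ with respect to $z$, evaluated at $z$, is $$\nabla^2 J(i)=\left[\frac{\partial H^i_0}{\partial u_0},\frac{\partial H^i_1}{\partial u_1},\dots,\frac{\partial H^i_N}{\partial u_N}\right],$$ where $\frac{\partial H^i_k}{\partial u_k}$ denotes the partial derivative of $H_i^{(k)}$ with respect to its second argument, evaluated at $(x_k,u_k,\lambda_{k+1},\alpha_{k+1},\beta_k)$.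
   Context: Rows and columns of the Hessian are indexed by $0,1,\dots,N$, corresponding to the components $u_0,\dots,u_N$ of $z$. $\mathbf{0}$ denotes the zero vector in $\mathbb{R}^n$. Partial derivatives with respect to vector arguments are column vectors (gradients). The paper treats the case of scalar controls $u_k$, stating that the extension to vector controls is analogous. The quantity $L(x_i,u_i,\lambda_{i+1})$, viewed as a function of $z$ through the state and costate recursions, equals the $i$th component $\partial J/\partial u_i$ of the gradient of $J$. *)

(* Defs.v *)
From mathcomp Require Import all_boot all_algebra.
From mathcomp Require Import all_classical all_reals all_analysis.
Set Implicit Arguments. Unset Strict Implicit. Unset Printing Implicit Defensive.
Import numFieldNormedType.Exports.
Local Open Scope ring_scope.

Definition C1 (R : realType) (U V : normedModType R) (f : U -> V) : Prop :=
  (forall p, differentiable f p) /\ (forall v : U, continuous ('D_v f)).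

Definition C2 (R : realType) (U V : normedModType R) (f : U -> V) : Prop :=
  C1 f /\ (forall v : U, C1 ('D_v f)).

Definition ev (R : realType) (m : nat) (j : 'I_m) : 'rV[R]_m := delta_mx 0 j.

Definition dotv (R : realType) (m : nat) (a b : 'rV[R]_m) : R :=
  \sum_(j < m) a 0 j * b 0 j.

Definition grad (R : realType) (m : nat) (f : 'rV[R]_m -> R) (p : 'rV[R]_m)
  : 'rV[R]_m := \row_(j < m) 'D_(ev R j) f p.

Definition hessian (R : realType) (m : nat) (f : 'rV[R]_m -> R) (z : 'rV[R]_m)
  : 'M[R]_m := \matrix_(i < m, j < m) 'D_(ev R j) ('D_(ev R i) f) z.

Section OC.
Variables (R : realType) (n N : nat).
Variable Phi : 'rV[R]_n -> R -> R.
Variable F : 'rV[R]_n -> R -> 'rV[R]_n.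

Definition Ham (x : 'rV[R]_n) (u : R) (l : 'rV[R]_n) : R :=
  Phi x u + dotv l (F x u).

Definition Gf (x : 'rV[R]_n) (u : R) (l : 'rV[R]_n) : 'rV[R]_n :=
  grad (fun y => Ham y u l) x.
Definition Lf (x : 'rV[R]_n) (u : R) (l : 'rV[R]_n) : R :=
  derive1 (fun v => Ham x v l) u.

Definition ctrl (z : 'rV[R]_(N.+1)) (k : nat) : R := z 0 (inord k).

Fixpoint state (x0 : 'rV[R]_n) (z : 'rV[R]_(N.+1)) (k : nat) : 'rV[R]_n :=
  match k with
  | 0 => x0
  | k'.+1 => F (state x0 z k') (ctrl z k')
  end.

Definition Jcost (x0 : 'rV[R]_n) (z : 'rV[R]_(N.+1)) : R :=
  \sum_(k < N.+1) Phi (state x0 z k) (ctrl z k).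

(* costates: lambda_{N+1} = 0, lambda_k = G(x_k,u_k,lambda_{k+1});
   costate_aux s = lambda_{N+1-s} *)
Fixpoint costate_aux (x0 : 'rV[R]_n) (z : 'rV[R]_(N.+1)) (s : nat)
  : 'rV[R]_n :=
  match s with
  | 0 => 0
  | s'.+1 => Gf (state x0 z (N - s')) (ctrl z (N - s')) (costate_aux x0 z s')
  end.
Definition costate (x0 : 'rV[R]_n) (z : 'rV[R]_(N.+1)) (k : nat) : 'rV[R]_n :=
  costate_aux x0 z (N.+1 - k).

Definition Hik (i k : nat) (x : 'rV[R]_n) (u : R) (l a b : 'rV[R]_n) : R :=
  (if k == i then Lf x u l else 0) + dotv a (F x u) + dotv b (Gf x u l).

End OC.

(* Main.v *)
Require Import Defs.
From mathcomp Require Import all_boot all_algebra.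
From mathcomp Require Import all_classical all_reals all_analysis.
Import numFieldNormedType.Exports.
Local Open Scope ring_scope.
From mathcomp Require Import ring lra zify.
Import GRing.Theory Num.Theory.
Set Implicit Arguments. Unset Strict Implicit. Unset Printing Implicit Defensive.


Section Gen.
Variable R : realType.

Lemma DD (V W : normedModType R) (g : V -> W) q v1 v2 :
  differentiable g q -> 'D_(v1 + v2) g q = 'D_v1 g q + 'D_v2 g q.
Proof. by move=> dg; rewrite !deriveE // linearD. Qed.

Lemma DZ (V W : normedModType R) (g : V -> W) q k v :
  differentiable g q -> 'D_(k *: v) g q = k *: 'D_v g q.
Proof. by move=> dg; rewrite !deriveE // linearZ. Qed.

Lemma Dsum (V W : normedModType R) (g : V -> W) q m (v : 'I_m -> V) :
  differentiable g q -> 'D_(\sum_(i < m) v i) g q = \sum_(i < m) 'D_(v i) g q.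
Proof.
move=> dg; rewrite deriveE // linear_sum; apply: eq_bigr => i _.
by rewrite deriveE.
Qed.

Lemma Dcomp (U V W : normedModType R) (f : U -> V) (g : V -> W) x v :
  differentiable f x -> differentiable g (f x) ->
  'D_v (fun y => g (f y)) x = 'D_('D_v f x) g (f x).
Proof.
move=> df dg.
have -> : (fun y => g (f y)) = g \o f by [].
rewrite deriveE; last exact: differentiable_comp.
by rewrite diff_comp // /= -!deriveE.
Qed.

Lemma Dpair (U V W : normedModType R) (f : U -> V) (g : U -> W) x v :
  differentiable f x -> differentiable g x ->
  'D_v (fun y => (f y, g y)) x = ('D_v f x, 'D_v g x).
Proof.
move=> df dg; rewrite deriveE; last exact: differentiable_pair.
by rewrite diff_pair // -!deriveE.
Qed.

Lemma Dcoord (V : normedModType R) m k (M : V -> 'M[R]_(m, k)) t v i j :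
  differentiable M t -> 'D_v (fun t => M t i j) t = 'D_v M t i j.
Proof.
move=> dM; rewrite derive_mx ?mxE //; exact: diff_derivable.
Qed.

Lemma Dcoord_id m k (M v : 'M[R]_(m, k)) i j :
  'D_v (fun t : 'M[R]_(m,k) => t i j) M = v i j.
Proof.
rewrite (Dcoord (M:=id)) //.
by rewrite derive_id.
Qed.

End Gen.
Section Fun.
Variable R : realType.
Context {V W : normedModType R}.

Lemma diffDf (f g : V -> W) x : differentiable f x -> differentiable g x ->
  differentiable (fun y => f y + g y) x.
Proof. by move=> df dg; have := differentiableD df dg. Qed.

Lemma DDf (f g : V -> W) x v : differentiable f x -> differentiable g x ->
  'D_v (fun y => f y + g y) x = 'D_v f x + 'D_v g x.
Proof.
move=> df dg; have -> : (fun y => f y + g y) = f + g by [].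
by rewrite deriveD //; apply: diff_derivable.
Qed.

Lemma diffsumf m (h : 'I_m -> V -> W) x : (forall i, differentiable (h i) x) ->
  differentiable (fun y => \sum_(i < m) h i y) x.
Proof. by move=> dh; rewrite -fct_sumE; apply: differentiable_sum. Qed.

Lemma Dsumf m (h : 'I_m -> V -> W) x v : (forall i, differentiable (h i) x) ->
  'D_v (fun y => \sum_(i < m) h i y) x = \sum_(i < m) 'D_v (h i) x.
Proof.
by move=> dh; rewrite -fct_sumE derive_sum // => i; apply: diff_derivable.
Qed.

Lemma diffZf (f : V -> W) (k : R) x : differentiable f x ->
  differentiable (fun y => k *: f y) x.
Proof. by move=> df; have := differentiableZ k df. Qed.

Lemma DZf (f : V -> W) (k : R) x v : differentiable f x ->
  'D_v (fun y => k *: f y) x = k *: 'D_v f x.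
Proof.
move=> df; have -> : (fun y => k *: f y) = k \*: f by [].
by rewrite deriveZ //; apply: diff_derivable.
Qed.

Lemma diffcompf (Y : normedModType R) (f : V -> Y) (g : Y -> W) x :
  differentiable f x -> differentiable g (f x) ->
  differentiable (fun y => g (f y)) x.
Proof. by move=> df dg; have := differentiable_comp df dg. Qed.

Lemma diffcst (w : W) x : differentiable (fun _ : V => w) x.
Proof. exact: differentiable_cst. Qed.

Lemma Dcst (w : W) x v : 'D_v (fun _ : V => w) x = 0.
Proof. exact: derive_cst. Qed.

End Fun.

Section FunR.
Variable R : realType.
Context {V : normedModType R}.

Lemma diffMf (f g : V -> R) x : differentiable f x -> differentiable g x ->
  differentiable (fun y => f y * g y) x.
Proof. by move=> df dg; have := differentiableM df dg. Qed.

Lemma DMf (f g : V -> R) x v : differentiable f x -> differentiable g x ->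
  'D_v (fun y => f y * g y) x = f x * 'D_v g x + g x * 'D_v f x.
Proof.
move=> df dg; have -> : (fun y => f y * g y) = f * g by [].
by rewrite deriveM //; apply: diff_derivable.
Qed.

Lemma diffcMf (f : V -> R) k x : differentiable f x ->
  differentiable (fun y => k * f y) x.
Proof. by move=> df; apply: (diffMf (f := fun _ => k)) => //; apply: diffcst. Qed.

Lemma DcMf (f : V -> R) k x v : differentiable f x ->
  'D_v (fun y => k * f y) x = k * 'D_v f x.
Proof.
move=> df; rewrite (DMf (f := fun _ => k)) //; try exact: diffcst.
by rewrite Dcst mulr0 addr0.
Qed.

End FunR.
Section Ulevel.
Variables (R : realType) (n : nat).
Local Notation U := ('rV[R]_n * R)%type.

Definition Ec (c : 'I_n) : U := (ev R c, 0).
Definition Eu : U := (0, 1).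

Definition smooth (g : U -> R) :=
  (forall q, differentiable g q) /\ (forall v q, differentiable ('D_v g) q).

Lemma pair_sum m (f : 'I_m -> 'rV[R]_n) :
  (\sum_(c < m) f c, 0 : R) = \sum_(c < m) ((f c, 0) : U).
Proof.
elim/big_rec2: _ => [//|c a b _ <-].
by rewrite -[0 in LHS]addr0.
Qed.

Lemma pair_decomp (a : 'rV[R]_n) (t : R) :
  ((a, t) : U) = \sum_(c < n) a 0 c *: Ec c + t *: Eu.
Proof.
have -> : \sum_(c < n) a 0 c *: Ec c = (\sum_(c < n) a 0 c *: ev R c, 0).
  rewrite pair_sum; apply: eq_bigr => c _.
  rewrite /Ec; apply: injective_projections => //=.
  try by change (a 0 c *: (0:R) = 0); rewrite scaler0.
rewrite -row_sum_delta /Eu; apply: injective_projections => /=.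
  by change (a = a + t *: (0 : 'rV[R]_n)); rewrite scaler0 addr0.
by change (t = 0 + t * 1); rewrite add0r mulr1.
Qed.
End Ulevel.
Arguments Ec {R n} c.
Arguments Eu {R} n.
Section Ulevel2.
Variables (R : realType) (n : nat).
Local Notation U := ('rV[R]_n * R)%type.

Lemma scalerR (k x : R) : k *: x = k * x. Proof. by []. Qed.

Lemma Dsplit (W : normedModType R) (g : U -> W) q a t : differentiable g q ->
  'D_((a, t) : U) g q = \sum_(c < n) a 0 c *: 'D_(Ec c) g q + t *: 'D_(Eu n) g q.
Proof.
move=> dg; rewrite pair_decomp DD // Dsum // DZ //.
by under eq_bigr do rewrite DZ //.
Qed.

Lemma Dsplit2 (W : normedModType R) (g : U -> W) q a t : differentiable g q ->
  'D_((a, t) : U) g q = 'D_((a, 0) : U) g q + t *: 'D_(Eu n) g q.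
Proof. by move=> dg; rewrite (Dsplit _ t) // (Dsplit _ 0) // scale0r addr0. Qed.

Lemma Dfun_split (g : U -> R) a t : (forall q, differentiable g q) ->
  'D_((a, t) : U) g = fun q => \sum_(c < n) a 0 c * 'D_(Ec c) g q + t * 'D_(Eu n) g q.
Proof. by move=> dg; apply: funext => q; rewrite Dsplit. Qed.

Lemma D2split (g : U -> R) (hg : smooth g) w q a t :
  'D_w ('D_((a, t) : U) g) q =
  \sum_(c < n) a 0 c * 'D_w ('D_(Ec c) g) q + t * 'D_w ('D_(Eu n) g) q.
Proof.
case: hg => hg1 hg2.
rewrite Dfun_split // DDf //; first last.
- by apply: diffcMf.
- by apply: diffsumf => c; apply: diffcMf.
rewrite Dsumf; last by move=> c; apply: diffcMf.
rewrite DcMf //; congr (_ + _); apply: eq_bigr => c _; by rewrite DcMf.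
Qed.

Lemma D2_split2 (g : U -> R) (hg : smooth g) w q a t :
  'D_w ('D_((a, t) : U) g) q = 'D_w ('D_((a, 0) : U) g) q + t * 'D_w ('D_(Eu n) g) q.
Proof. by rewrite (D2split _ _ _ _ t) // (D2split _ _ _ _ 0) // mul0r addr0. Qed.

Lemma D2_lin_w (g : U -> R) (hg : smooth g) v q a t :
  'D_((a, t) : U) ('D_v g) q = 'D_((a, 0) : U) ('D_v g) q + t * 'D_(Eu n) ('D_v g) q.
Proof. by case: hg => _ h2; rewrite Dsplit2. Qed.

Lemma GL_fun (Z : normedModType R) (g : U -> R) (hg : smooth g) (p : Z -> U)
  (vv : Z -> 'rV[R]_n) (vu : Z -> R) :
  (fun z => 'D_((vv z, vu z) : U) g (p z)) =
  fun z => \sum_(c < n) vv z 0 c * 'D_(Ec c) g (p z) + vu z * 'D_(Eu n) g (p z).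
Proof. by case: hg => h1 _; apply: funext => z; rewrite Dsplit. Qed.

Lemma GL_diff (Z : normedModType R) (g : U -> R) (hg : smooth g) (p : Z -> U)
  (vv : Z -> 'rV[R]_n) (vu : Z -> R) z :
  differentiable p z -> (forall c, differentiable (fun z => vv z 0 c) z) ->
  differentiable vu z ->
  differentiable (fun z => 'D_((vv z, vu z) : U) g (p z)) z.
Proof.
move=> dp dvv dvu; rewrite GL_fun //.
case: hg => h1 h2.
apply: diffDf.
  apply: diffsumf => c.
  apply: (diffMf (f := fun z => vv z 0 c) (g := fun z => 'D_(Ec c) g (p z))) => //.
  exact: (diffcompf (g := 'D_(Ec c) g) dp (h2 _ _)).
apply: (diffMf (f := vu) (g := fun z => 'D_(Eu n) g (p z))) => //.
exact: (diffcompf (g := 'D_(Eu n) g) dp (h2 _ _)).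
Qed.

Lemma GL_D (Z : normedModType R) (g : U -> R) (hg : smooth g) (p : Z -> U)
  (vv : Z -> 'rV[R]_n) (vu : Z -> R) z w :
  differentiable p z -> (forall c, differentiable (fun z => vv z 0 c) z) ->
  differentiable vu z ->
  'D_w (fun z => 'D_((vv z, vu z) : U) g (p z)) z =
  'D_('D_w p z) ('D_((vv z, vu z) : U) g) (p z) +
  'D_(((\row_c 'D_w (fun z => vv z 0 c) z), 'D_w vu z) : U) g (p z).
Proof.
move=> dp dvv dvu; rewrite GL_fun //.
have hg' := hg; case: hg' => h1 h2.
have dc : forall c, differentiable (fun z => 'D_(Ec c) g (p z)) z.
  by move=> c; exact: (diffcompf (g := 'D_(Ec c) g) dp (h2 _ _)).
have du : differentiable (fun z => 'D_(Eu n) g (p z)) z.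
  exact: (diffcompf (g := 'D_(Eu n) g) dp (h2 _ _)).
rewrite DDf; first last.
- by apply: diffMf.
- by apply: diffsumf => c; apply: diffMf.
rewrite Dsumf; last by move=> c; apply: diffMf.
have e1 : forall c, 'D_w (fun z => vv z 0 c * 'D_(Ec c) g (p z)) z =
    vv z 0 c * 'D_('D_w p z) ('D_(Ec c) g) (p z) +
    'D_(Ec c) g (p z) * 'D_w (fun z => vv z 0 c) z.
  move=> c.
  have -> := DMf w (dvv c) (dc c).
  by rewrite (Dcomp w dp (h2 _ _)).
have e2 : 'D_w (fun z => vu z * 'D_(Eu n) g (p z)) z =
    vu z * 'D_('D_w p z) ('D_(Eu n) g) (p z) +
    'D_(Eu n) g (p z) * 'D_w vu z.
  have -> := DMf w dvu du.
  by rewrite (Dcomp w dp (h2 _ _)).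
under eq_bigr do rewrite e1.
rewrite e2 D2split // (Dsplit (\row_c 'D_w (fun z => vv z 0 c) z) ('D_w vu z) (h1 (p z))).
rewrite big_split /=.
have -> : \sum_(c < n) (\row_c0 'D_w (fun z0 : Z => vv z0 0 c0) z) 0 c *: 'D_(Ec c) g (p z)
   = \sum_(c < n) 'D_(Ec c) g (p z) * 'D_w (fun z0 : Z => vv z0 0 c) z.
  by apply: eq_bigr => c _; rewrite mxE scalerR mulrC.
rewrite scalerR [_ * 'D_w vu z]mulrC.
ring.
Qed.

End Ulevel2.
Section Prob.
Variables (R : realType) (n N : nat).
Variable Phi : 'rV[R]_n -> R -> R.
Variable F : 'rV[R]_n -> R -> 'rV[R]_n.
Hypothesis hPhi : C2 (fun p : 'rV[R]_n * R => Phi p.1 p.2).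
Hypothesis hF : C2 (fun p : 'rV[R]_n * R => F p.1 p.2).
Variable x0 : 'rV[R]_n.
Local Notation U := ('rV[R]_n * R)%type.
Local Notation Z := 'rV[R]_(N.+1).

Definition Pt (q : U) : R := Phi q.1 q.2.
Definition Ft (q : U) : 'rV[R]_n := F q.1 q.2.
Definition Fm (m : 'I_n) (q : U) : R := F q.1 q.2 0 m.

Lemma smooth_Pt : smooth Pt.
Proof.
case: hPhi => [[h1 _] h2]; split => // v q.
by case: (h2 v) => h _; apply: h.
Qed.

Lemma Ft_diff q : differentiable Ft q.
Proof. by case: hF => [[h1 _] _]. Qed.

Lemma DFt_diff v q : differentiable ('D_v Ft) q.
Proof. by case: hF => [_ h2]; case: (h2 v) => h _; apply: h. Qed.

Lemma DFm m v q : 'D_v (Fm m) q = 'D_v Ft q 0 m.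
Proof. exact: (Dcoord (M := Ft)) (Ft_diff q). Qed.

Lemma smooth_Fm m : smooth (Fm m).
Proof.
split => [q|v q].
  exact: (diffcompf (g := fun M : 'rV[R]_n => M 0 m) (Ft_diff q) (differentiable_coord _ _ _)).
have -> : 'D_v (Fm m) = fun q => 'D_v Ft q 0 m by apply: funext => q'; rewrite DFm.
exact: (diffcompf (g := fun M : 'rV[R]_n => M 0 m) (DFt_diff v q) (differentiable_coord _ _ _)).
Qed.

Definition X k (z : Z) : 'rV[R]_n := state F x0 z k.
Definition P k (z : Z) : U := (X k z, ctrl z k).

Lemma ctrl_diff k z : differentiable (fun z : Z => ctrl z k) z.
Proof. exact: differentiable_coord. Qed.

Lemma Dctrl k z w : 'D_w (fun z : Z => ctrl z k) z = w 0 (inord k).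
Proof. exact: Dcoord_id. Qed.

Lemma XP_diff k : (forall z, differentiable (X k) z) /\ (forall z, differentiable (P k) z).
Proof.
elim: k => [|k [IH1 IH2]].
  have h : forall z, differentiable (X 0) z by move=> z; exact: diffcst.
  split => // z; exact: (differentiable_pair (h z) (ctrl_diff 0 z)).
have h : forall z, differentiable (X k.+1) z.
  move=> z; exact: (diffcompf (g := Ft) (IH2 z) (Ft_diff _)).
split => // z; exact: (differentiable_pair (h z) (ctrl_diff k.+1 z)).
Qed.

Lemma X_diff k z : differentiable (X k) z. Proof. by case: (XP_diff k). Qed.
Lemma P_diff k z : differentiable (P k) z. Proof. by case: (XP_diff k). Qed.

Lemma DP k z w : 'D_w (P k) z = ('D_w (X k) z, w 0 (inord k)).
Proof.
rewrite /P (Dpair w (X_diff k z) (ctrl_diff k z)).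
by rewrite Dctrl.
Qed.

Lemma DXS k z w m : 'D_w (X k.+1) z 0 m = 'D_('D_w (P k) z) (Fm m) (P k z).
Proof.
have -> : X k.+1 = fun z => Ft (P k z) by [].
by rewrite (Dcomp w (P_diff k z) (Ft_diff _)) DFm.
Qed.

Lemma DX0 z w : 'D_w (X 0) z = 0.
Proof. exact: Dcst. Qed.


Definition Bd (d : Z) k z : 'rV[R]_n := 'D_d (X k) z.

Lemma Bd_comp d k z m :
  Bd d k.+1 z 0 m = 'D_((Bd d k z, d 0 (inord k)) : U) (Fm m) (P k z).
Proof. by rewrite /Bd DXS DP. Qed.

Lemma Bd0 d z : Bd d 0 z = 0.
Proof. exact: DX0. Qed.

Lemma Bd_diff d k m z : differentiable (fun z => Bd d k z 0 m) z.
Proof.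
elim: k m z => [|k IH] m z.
  have -> : (fun z => Bd d 0 z 0 m) = fun _ => 0.
    by apply: funext => z'; rewrite Bd0 mxE.
  exact: diffcst.
have -> : (fun z => Bd d k.+1 z 0 m) =
    fun z => 'D_((Bd d k z, (fun _ : Z => d 0 (inord k)) z) : U) (Fm m) (P k z).
  by apply: funext => z'; rewrite Bd_comp.
apply: GL_diff; do ?[exact: smooth_Fm | exact: P_diff | by move=> c; exact: IH | exact: diffcst].
Qed.

Definition G (d e : Z) k z : 'rV[R]_n := \row_c 'D_e (fun z => Bd d k z 0 c) z.

Lemma G0 d e z : G d e 0 z = 0.
Proof.
apply/rowP => c; rewrite !mxE.
have -> : (fun z => Bd d 0 z 0 c) = fun _ => 0.
  by apply: funext => z'; rewrite Bd0 mxE.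
exact: Dcst.
Qed.

Lemma G_rec d e k z m :
  G d e k.+1 z 0 m =
  'D_('D_e (P k) z) ('D_((Bd d k z, d 0 (inord k)) : U) (Fm m)) (P k z) +
  'D_((G d e k z, 0) : U) (Fm m) (P k z).
Proof.
rewrite mxE.
have -> : (fun z => Bd d k.+1 z 0 m) =
    fun z => 'D_((Bd d k z, (fun _ : Z => d 0 (inord k)) z) : U) (Fm m) (P k z).
  by apply: funext => z'; rewrite Bd_comp.
rewrite (@GL_D _ _ _ _ (smooth_Fm m) (P k) (Bd d k) (fun _ => d 0 (inord k)) z e); do ?[exact: P_diff | by move=> c; exact: Bd_diff | exact: diffcst].
by rewrite Dcst.
Qed.

Lemma J_fun : Jcost Phi F x0 = fun z => \sum_(k < N.+1) Pt (P k z).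
Proof. by []. Qed.

Lemma DJ d : 'D_d (Jcost Phi F x0) =
  fun z => \sum_(k < N.+1) 'D_((Bd d k z, d 0 (inord k)) : U) Pt (P k z).
Proof.
apply: funext => z; rewrite J_fun Dsumf.
  apply: eq_bigr => k _.
  by rewrite (Dcomp d (P_diff k z) (smooth_Pt.1 _)) DP.
move=> k; exact: (diffcompf (g := Pt) (P_diff k z) (smooth_Pt.1 _)).
Qed.

Lemma DDJ d e z : 'D_e ('D_d (Jcost Phi F x0)) z =
  \sum_(k < N.+1) ('D_('D_e (P k) z) ('D_((Bd d k z, d 0 (inord k)) : U) Pt) (P k z) +
                  'D_((G d e k z, 0) : U) Pt (P k z)).
Proof.
rewrite DJ.
have -> : (fun z => \sum_(k < N.+1) 'D_((Bd d k z, d 0 (inord k)) : U) Pt (P k z)) =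
   fun z => \sum_(k < N.+1) 'D_((Bd d k z, (fun _ : Z => d 0 (inord k)) z) : U) Pt (P k z).
  by [].
rewrite Dsumf.
  apply: eq_bigr => k _.
  rewrite (@GL_D _ _ _ _ smooth_Pt (P k) (Bd d k) (fun _ => d 0 (inord k)) z e); do ?[exact: P_diff | by move=> c; exact: Bd_diff | exact: diffcst].
  by rewrite Dcst.
move=> k; apply: GL_diff; do ?[exact: smooth_Pt | exact: P_diff | by move=> c; exact: Bd_diff | exact: diffcst].
Qed.


Definition HamQ (l : 'rV[R]_n) (q : U) : R := Pt q + \sum_(m < n) l 0 m * Fm m q.

Lemma HamQ_diff l q : differentiable (HamQ l) q.
Proof.
apply: diffDf; first exact: smooth_Pt.1.
apply: diffsumf => m; apply: diffcMf; exact: (smooth_Fm m).1.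
Qed.

Lemma DHamQ_fun l v : 'D_v (HamQ l) = fun q => 'D_v Pt q + \sum_(m < n) l 0 m * 'D_v (Fm m) q.
Proof.
apply: funext => q; rewrite /HamQ DDf; first last.
- apply: diffsumf => m; apply: diffcMf; exact: (smooth_Fm m).1.
- exact: smooth_Pt.1.
rewrite Dsumf; last by move=> m; apply: diffcMf; exact: (smooth_Fm m).1.
congr (_ + _); apply: eq_bigr => m _; rewrite DcMf //; exact: (smooth_Fm m).1.
Qed.

Lemma DHamQ l v q : 'D_v (HamQ l) q = 'D_v Pt q + \sum_(m < n) l 0 m * 'D_v (Fm m) q.
Proof. exact: (congr1 (fun f => f q) (DHamQ_fun l v)). Qed.

Lemma smooth_HamQ l : smooth (HamQ l).
Proof.
split; first exact: HamQ_diff.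
move=> v q; rewrite DHamQ_fun; apply: diffDf; first exact: smooth_Pt.2.
apply: diffsumf => m; apply: diffcMf; exact: (smooth_Fm m).2.
Qed.

Lemma D2HamQ l v w q : 'D_w ('D_v (HamQ l)) q =
  'D_w ('D_v Pt) q + \sum_(m < n) l 0 m * 'D_w ('D_v (Fm m)) q.
Proof.
rewrite DHamQ_fun DDf; first last.
- apply: diffsumf => m; apply: diffcMf; exact: (smooth_Fm m).2.
- exact: smooth_Pt.2.
rewrite Dsumf; last by move=> m; apply: diffcMf; exact: (smooth_Fm m).2.
congr (_ + _); apply: eq_bigr => m _; rewrite DcMf //; exact: (smooth_Fm m).2.
Qed.

Lemma slice_x (W : normedModType R) (g : U -> W) x u a :
  differentiable g (x, u) -> 'D_a (fun y => g (y, u)) x = 'D_((a, 0) : U) g (x, u).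
Proof.
move=> dg.
have dp : differentiable (fun y : 'rV[R]_n => ((y, u) : U)) x.
  by apply: (differentiable_pair (f := id) (g := fun _ => u)).
rewrite (Dcomp (f := fun y : 'rV[R]_n => ((y, u) : U)) a dp dg).
by rewrite (Dpair (f := id) (g := fun _ => u)) // derive_id Dcst.
Qed.

Lemma slice_u (W : normedModType R) (g : U -> W) x u t :
  differentiable g (x, u) -> 'D_t (fun v => g (x, v)) u = 'D_((0, t) : U) g (x, u).
Proof.
move=> dg.
have dp : differentiable (fun v : R => ((x, v) : U)) u.
  by apply: (differentiable_pair (f := fun _ => x) (g := id)).
rewrite (Dcomp (f := fun v : R => ((x, v) : U)) t dp dg).
by rewrite (Dpair (f := fun _ => x) (g := id)) // derive_id Dcst.
Qed.

Lemma dotvC (a b : 'rV[R]_n) : dotv a b = dotv b a.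
Proof. by apply: eq_bigr => c _; rewrite mulrC. Qed.

Lemma dotv0l (b : 'rV[R]_n) : dotv 0 b = 0.
Proof. by rewrite /dotv big1 // => c _; rewrite mxE mul0r. Qed.

Lemma dotv0r (b : 'rV[R]_n) : dotv b 0 = 0.
Proof. by rewrite dotvC dotv0l. Qed.

Lemma grad_slice (g : U -> R) x u w : (forall q, differentiable g q) ->
  dotv (grad (fun y => g (y, u)) x) w = 'D_((w, 0) : U) g (x, u).
Proof.
move=> dg; rewrite Dsplit // scale0r addr0 /dotv.
apply: eq_bigr => c _; by rewrite mxE slice_x // scalerR mulrC.
Qed.

Lemma Lf_eq x u l : Lf Phi F x u l = 'D_(Eu n) (HamQ l) (x, u).
Proof.
rewrite /Lf derive1E.
have -> : (fun v => Ham Phi F x v l) = fun v => HamQ l (x, v) by [].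
by rewrite slice_u //; exact: HamQ_diff.
Qed.

Lemma Gf_eq x u l : Gf Phi F x u l = grad (fun y => HamQ l (y, u)) x.
Proof. by []. Qed.

Definition HH (i k : nat) (l a b : 'rV[R]_n) (q : U) : R :=
  'D_((b, (k == i)%:R) : U) (HamQ l) q + \sum_(m < n) a 0 m * Fm m q.

Lemma Hik_eq (i k : nat) x u l a b :
  Hik Phi F i k x u l a b = HH i k l a b (x, u).
Proof.
rewrite /Hik /HH Lf_eq Gf_eq [dotv b _]dotvC grad_slice; last exact: HamQ_diff.
rewrite (Dsplit2 _ (k == i)%:R (HamQ_diff l (x, u))) scalerR.
have -> : dotv a (F x u) = \sum_(m < n) a 0 m * Fm m (x, u) by [].
by case: (k == i); rewrite ?mul1r ?mul0r; ring.
Qed.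

Lemma HH_diff i k l a b q : differentiable (HH i k l a b) q.
Proof.
apply: diffDf; first exact: (smooth_HamQ l).2.
apply: diffsumf => m; apply: diffcMf; exact: (smooth_Fm m).1.
Qed.

Lemma DHH i k l a b w q : 'D_w (HH i k l a b) q =
  'D_w ('D_((b, (k == i)%:R) : U) (HamQ l)) q + \sum_(m < n) a 0 m * 'D_w (Fm m) q.
Proof.
rewrite /HH DDf; first last.
- apply: diffsumf => m; apply: diffcMf; exact: (smooth_Fm m).1.
- exact: (smooth_HamQ l).2.
rewrite Dsumf; last by move=> m; apply: diffcMf; exact: (smooth_Fm m).1.
congr (_ + _); apply: eq_bigr => m _; rewrite DcMf //; exact: (smooth_Fm m).1.
Qed.

Lemma costate_rec (z : Z) k : (k <= N)%N ->
  costate Phi F x0 z k = Gf Phi F (X k z) (ctrl z k) (costate Phi F x0 z k.+1).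
Proof.
move=> kN; rewrite /costate subSS subSn //= subKn //.
Qed.

Lemma costate_last (z : Z) : costate Phi F x0 z N.+1 = 0.
Proof. by rewrite /costate subnn. Qed.

Lemma lam_dot (z : Z) k w : (k <= N)%N ->
  dotv (costate Phi F x0 z k) w =
  'D_((w, 0) : U) (HamQ (costate Phi F x0 z k.+1)) (P k z).
Proof.
move=> kN; rewrite costate_rec // Gf_eq grad_slice //; exact: HamQ_diff.
Qed.

Lemma grad_lin (K : 'I_n -> R) (C : R) l0 :
  grad (fun l : 'rV[R]_n => C + \sum_(m < n) l 0 m * K m) l0 = \row_m K m.
Proof.
apply/rowP => m; rewrite !mxE.
have dk : forall m', differentiable (fun l : 'rV[R]_n => l 0 m' * K m') l0.
  move=> m'; apply: (diffMf (f := fun l : 'rV[R]_n => l 0 m') (g := fun _ => K m')).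
    exact: differentiable_coord.
  exact: diffcst.
rewrite (DDf (f := fun _ => C)); first last.
- exact: diffsumf.
- exact: diffcst.
rewrite Dcst add0r Dsumf //.
rewrite (bigD1 m) //= big1.
  rewrite (DMf (f := fun l : 'rV[R]_n => l 0 m) (g := fun _ => K m)); first last.
  - exact: diffcst.
  - exact: differentiable_coord.
  by rewrite Dcst Dcoord_id /ev mxE !eqxx /= mulr0 add0r mulr1 addr0.
move=> m' hm'.
rewrite (DMf (f := fun l : 'rV[R]_n => l 0 m') (g := fun _ => K m')); first last.
- exact: diffcst.
- exact: differentiable_coord.
by rewrite Dcst Dcoord_id /ev mxE eqxx (negbTE hm') /= mulr0 add0r mulr0.
Qed.


Lemma tele (f : nat -> R) m : \sum_(k < m) (f k - f k.+1) = f 0%N - f m.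
Proof.
elim: m => [|m IH]; first by rewrite big_ord0 subrr.
by rewrite big_ord_recr /= IH addrA subrK.
Qed.

Lemma sum_delta (j : 'I_(N.+1)) (Y : nat -> R) :
  \sum_(k < N.+1) ev R j 0 (inord k) * Y k = Y j.
Proof.
rewrite (bigD1 j) //= big1.
  by rewrite inord_val /ev mxE !eqxx /= mul1r addr0.
move=> k hk; rewrite inord_val /ev mxE eqxx /=.
by rewrite (negbTE hk) mul0r.
Qed.

Lemma sum_lin (a A B : 'I_n -> R) (t : R) :
  \sum_(m < n) a m * (A m + t * B m) =
  \sum_(m < n) a m * A m + t * \sum_(m < n) a m * B m.
Proof.
rewrite big_distrr -big_split /=; apply: eq_bigr => m _; ring.
Qed.

Lemma delta_ev (d : 'I_(N.+1)) (k : nat) : (k < N.+1)%N ->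
  ev R d 0 (inord k) = (k == d)%:R.
Proof.
move=> hk; rewrite /ev mxE eqxx /=.
by rewrite -val_eqE /= inordK.
Qed.

Lemma D00 (W : normedModType R) (g : U -> W) q : 'D_((0, 0) : U) g q = 0.
Proof. exact: derive0. Qed.

Lemma main (z : Z) (i : 'I_(N.+1)) (alpha beta : nat -> 'rV[R]_n) :
  let x := state F x0 z in
  let u := ctrl z in
  let lam := costate Phi F x0 z in
  beta 0%N = 0 ->
  (forall k : nat, (k < N)%N ->
     beta k.+1 =
       grad (fun l => Hik Phi F i k (x k) (u k) l (alpha k.+1) (beta k))
            (lam k.+1)) ->
  alpha N.+1 = 0 ->
  (forall k : nat, (1 <= k <= N)%N ->
     alpha k =
       grad (fun y => Hik Phi F i k y (u k) (lam k.+1) (alpha k.+1) (beta k))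
            (x k)) ->
  row i (hessian (Jcost Phi F x0) z) =
    \row_(k < N.+1)
      derive1 (fun v => Hik Phi F i k (x k) v (lam k.+1) (alpha k.+1) (beta k))
              (u k).
Proof.
move=> x u lam hb0 hbS ha1 haS.
have hbeta : forall k, (k <= N)%N -> beta k = Bd (ev R i) k z.
  elim=> [|k IH] hk; first by rewrite hb0 Bd0.
  rewrite hbS //.
  have -> : (fun l => Hik Phi F i k (x k) (u k) l (alpha k.+1) (beta k)) =
     fun l => ('D_((beta k, (k == i)%:R) : U) Pt (P k z) +
               \sum_(m < n) alpha k.+1 0 m * Fm m (P k z)) +
              \sum_(m < n) l 0 m * 'D_((beta k, (k == i)%:R) : U) (Fm m) (P k z).
    apply: funext => l; rewrite Hik_eq /HH DHamQ.
    rewrite /P /X /x /u; ring.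
  rewrite grad_lin; apply/rowP => m; rewrite mxE Bd_comp IH ?delta_ev //.
  all: try lia.
apply/rowP => j; rewrite !mxE DDJ.
pose b k := ((Bd (ev R i) k z, ev R i 0 (inord k)) : U).
pose Dk k := Bd (ev R j) k z.
pose Q k v w := 'D_w ('D_v (HamQ (lam k.+1))) (P k z).
pose T k := \sum_(m < n) alpha k.+1 0 m * 'D_(Eu n) (Fm m) (P k z).
pose Gk k := G (ev R i) (ev R j) k z.
have -> : derive1 (fun v => Hik Phi F i j (x j) v (lam j.+1) (alpha j.+1) (beta j)) (u j)
    = Q j (b j) (Eu n) + T j.
  rewrite derive1E.
  have -> : (fun v => Hik Phi F i j (x j) v (lam j.+1) (alpha j.+1) (beta j)) =
      fun v => HH i j (lam j.+1) (alpha j.+1) (beta j) (x j, v).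
    by apply: funext => v; rewrite Hik_eq.
  rewrite slice_u; last exact: HH_diff.
  rewrite DHH (hbeta j); last by rewrite -ltnS.
  by rewrite -(delta_ev i (ltn_ord j)).
have stepA : forall k : 'I_(N.+1),
    'D_('D_(ev R j) (P k) z) ('D_(b k) Pt) (P k z) + 'D_((Gk k, 0) : U) Pt (P k z) =
    Q k (b k) ('D_(ev R j) (P k) z) + (dotv (lam k) (Gk k) - dotv (lam k.+1) (Gk k.+1)).
  move=> k.
  have e1 : dotv (lam k.+1) (Gk k.+1) =
      \sum_(m < n) lam k.+1 0 m * 'D_('D_(ev R j) (P k) z) ('D_(b k) (Fm m)) (P k z) +
      \sum_(m < n) lam k.+1 0 m * 'D_((Gk k, 0) : U) (Fm m) (P k z).
    by rewrite /dotv -big_split /=; apply: eq_bigr => m _; rewrite /Gk G_rec mulrDr.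
  rewrite e1 /lam lam_dot; last by rewrite -ltnS.
  rewrite DHamQ /Q D2HamQ.
  ring.
under eq_bigr do rewrite stepA.
rewrite big_split /= (tele (fun k => dotv (lam k) (Gk k))) /Gk G0 dotv0r /lam costate_last dotv0l subrr addr0.
have stepB : forall k : 'I_(N.+1),
    Q k (b k) ('D_(ev R j) (P k) z) =
    Q k (b k) ((Dk k, 0) : U) + ev R j 0 (inord k) * Q k (b k) (Eu n).
  by move=> k; rewrite DP /Q (D2_lin_w (smooth_HamQ _)).
under eq_bigr do rewrite stepB.
rewrite big_split /= (sum_delta j (fun k => Q k (b k) (Eu n))).
have stepC : forall k : 'I_(N.+1),
    Q k (b k) ((Dk k, 0) : U) =
    (dotv (alpha k) (Dk k) - dotv (alpha k.+1) (Dk k.+1)) + ev R j 0 (inord k) * T k.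
  move=> k.
  have e2 : dotv (alpha k.+1) (Dk k.+1) =
     \sum_(m < n) alpha k.+1 0 m * 'D_((Dk k, 0) : U) (Fm m) (P k z) + ev R j 0 (inord k) * T k.
    rewrite /dotv /T big_distrr -big_split /=; apply: eq_bigr => m _.
    rewrite /Dk Bd_comp (Dsplit2 _ _ ((smooth_Fm m).1 _)) scalerR; ring.
  rewrite e2.
  have [hk0|hk0] := eqVneq (k : nat) 0%N.
    have hD : Dk k = 0 by rewrite /Dk hk0 Bd0.
    rewrite hD dotv0r /Q D00 big1; last by move=> m _; rewrite D00 mulr0.
    ring.
  have hk1 : (1 <= k <= N)%N by apply/andP; split; [rewrite lt0n | rewrite -ltnS].
  have -> : dotv (alpha k) (Dk k) = 'D_((Dk k, 0) : U) (HH i k (lam k.+1) (alpha k.+1) (beta k)) (P k z).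
    rewrite (haS k hk1).
    have -> : (fun y => Hik Phi F i k y (u k) (lam k.+1) (alpha k.+1) (beta k)) =
        fun y => HH i k (lam k.+1) (alpha k.+1) (beta k) (y, u k).
      by apply: funext => y; rewrite Hik_eq.
    by rewrite grad_slice //; exact: HH_diff.
  rewrite DHH (hbeta k); last by rewrite -ltnS.
  rewrite -(delta_ev i (ltn_ord k)) /Q /b.
  ring.
under eq_bigr do rewrite stepC.
rewrite big_split /= (tele (fun k => dotv (alpha k) (Dk k))) (sum_delta j T).
rewrite /Dk Bd0 dotv0r ha1 dotv0l subrr add0r.
by rewrite addrC.
Qed.

End Prob.

Theorem theorem1 (R : realType) (n N : nat) (hn : (0 < n)%N) (hN : (0 < N)%N)
  (Phi : 'rV[R]_n -> R -> R) (F : 'rV[R]_n -> R -> 'rV[R]_n)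
  (hPhi : C2 (fun p : 'rV[R]_n * R => Phi p.1 p.2))
  (hF : C2 (fun p : 'rV[R]_n * R => F p.1 p.2))
  (x0 : 'rV[R]_n) (z : 'rV[R]_(N.+1)) (i : 'I_(N.+1))
  (alpha beta : nat -> 'rV[R]_n) :
  let x := state F x0 z in
  let u := ctrl z in
  let lam := costate Phi F x0 z in
  beta 0%N = 0 ->
  (forall k : nat, (k < N)%N ->
     beta k.+1 =
       grad (fun l => Hik Phi F i k (x k) (u k) l (alpha k.+1) (beta k))
            (lam k.+1)) ->
  alpha N.+1 = 0 ->
  (forall k : nat, (1 <= k <= N)%N ->
     alpha k =
       grad (fun y => Hik Phi F i k y (u k) (lam k.+1) (alpha k.+1) (beta k))
            (x k)) ->
  row i (hessian (Jcost Phi F x0) z) =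
    \row_(k < N.+1)
      derive1 (fun v => Hik Phi F i k (x k) v (lam k.+1) (alpha k.+1) (beta k))
              (u k).
Proof. exact: (@main R n N Phi F hPhi hF x0 z i alpha beta). Qed.
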